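(* The functor $\mathrm{Up}\circ\mathrm{Dn}:\mathbf{Poset}\to\mathbf{Poset}$ can be given a monad structure $(\mathrm{Up}\,\mathrm{Dn},\eta^1,\mu^1)$.
   Context: $\mathbf{Poset}$ is the category of partially ordered sets and monotone maps. $\mathrm{Up}$ sends a poset $(X,\le)$ to the set of its upward closed subsets ordered by reverse inclusion $\supseteq$, and a monotone $f:X\to Y$ to $P\mapsto\{y\in Y\mid \exists x\in P,\ f(x)\le y\}$. $\mathrm{Dn}$ sends a poset $(X,\le)$ to the set of its downward closed subsets ordered by inclusion $\subseteq$, and a monotone $f:X\to Y$ to $P\mapsto\{y\in Y\mid\exists x\in P,\ y\le f(x)\}$. A monad on a category is a triple $(T,\eta,\mu)$ with $T$ an endofunctor and natural transformations $\eta:\mathrm{id}\Rightarrow T$, $\mu:TT\Rightarrow T$ satisfying $\mu_X\circ\eta_{TX}=\mathrm{id}=\mu_X\circ T(\eta_X)$ and $\mu_X\circ T(\mu_X)=\mu_X\circ\mu_{TX}$. *)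

(* Defs.v *)
From Stdlib Require Import ClassicalEpsilon FunctionalExtensionality PropExtensionality ProofIrrelevance.

Set Implicit Arguments.

Record Poset := {
  carrier :> Type;
  le : carrier -> carrier -> Prop;
  le_refl : forall x, le x x;
  le_trans : forall x y z, le x y -> le y z -> le x z;
  le_antisym : forall x y, le x y -> le y x -> x = y
}.
Arguments le {p} _ _.

Record Mono (X Y : Poset) := {
  mfun :> X -> Y;
  mfun_mono : forall x y, le x y -> le (mfun x) (mfun y)
}.

Definition upset (X : Poset) := { P : X -> Prop | forall x y, P x -> le x y -> P y }.
Definition dnset (X : Poset) := { P : X -> Prop | forall x y, P y -> le x y -> P x }.

Lemma sig_pred_ext (X : Type) (C : (X -> Prop) -> Prop) (P Q : {p : X -> Prop | C p}) :
  (forall x, proj1_sig P x <-> proj1_sig Q x) -> P = Q.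
Proof.
  destruct P as [p hp], Q as [q hq]; simpl; intro H.
  assert (p = q) as <-.
  { apply functional_extensionality; intro x; apply propositional_extensionality; apply H. }
  f_equal; apply proof_irrelevance.
Qed.

Definition Up (X : Poset) : Poset.
Proof.
  refine {| carrier := upset X;
            le := fun P Q => forall x, proj1_sig Q x -> proj1_sig P x |}.
  - auto.
  - intros P Q R h1 h2 x hx; auto.
  - intros P Q h1 h2; apply sig_pred_ext; intro x; split; auto.
Defined.

Definition Dn (X : Poset) : Poset.
Proof.
  refine {| carrier := dnset X;
            le := fun P Q => forall x, proj1_sig P x -> proj1_sig Q x |}.
  - auto.
  - intros P Q R h1 h2 x hx; auto.
  - intros P Q h1 h2; apply sig_pred_ext; intro x; split; auto.
Defined.

Definition Up_obj {X Y : Poset} (f : Mono X Y) (P : Up X) : Up Y.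
Proof.
  exists (fun y => exists x, proj1_sig P x /\ le (f x) y).
  intros y y' [x [hx hle]] hyy'. exists x; split; auto.
  eapply le_trans; eauto.
Defined.

Definition Up_map {X Y : Poset} (f : Mono X Y) : Mono (Up X) (Up Y).
Proof.
  exists (Up_obj f).
  intros P Q hPQ y [x [hx hle]]; simpl. exists x; split; auto.
Defined.

Definition Dn_obj {X Y : Poset} (f : Mono X Y) (P : Dn X) : Dn Y.
Proof.
  exists (fun y => exists x, proj1_sig P x /\ le y (f x)).
  intros y y' [x [hx hle]] hyy'. exists x; split; auto.
  eapply le_trans; eauto.
Defined.

Definition Dn_map {X Y : Poset} (f : Mono X Y) : Mono (Dn X) (Dn Y).
Proof.
  exists (Dn_obj f).
  intros P Q hPQ y [x [hx hle]]; simpl. exists x; split; auto.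
Defined.

Definition UpDn (X : Poset) : Poset := Up (Dn X).
Definition UpDn_map {X Y : Poset} (f : Mono X Y) : Mono (UpDn X) (UpDn Y) :=
  Up_map (Dn_map f).

Definition is_UpDn_monad
  (eta : forall X : Poset, Mono X (UpDn X))
  (mu : forall X : Poset, Mono (UpDn (UpDn X)) (UpDn X)) : Prop :=
  (forall (X Y : Poset) (f : Mono X Y) (x : X),
      UpDn_map f (eta X x) = eta Y (f x)) /\
  (forall (X Y : Poset) (f : Mono X Y) (t : UpDn (UpDn X)),
      UpDn_map f (mu X t) = mu Y (UpDn_map (UpDn_map f) t)) /\
  (forall (X : Poset) (t : UpDn X), mu X (eta (UpDn X) t) = t) /\
  (forall (X : Poset) (t : UpDn X), mu X (UpDn_map (eta X) t) = t) /\
  (forall (X : Poset) (t : UpDn (UpDn (UpDn X))),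
      mu X (UpDn_map (mu X) t) = mu X (mu (UpDn X) t)).

(* Main.v *)
Require Import Defs.

Definition eta_obj (X : Poset) (x : X) : UpDn X.
Proof.
  exists (fun D : Dn X => proj1_sig D x).
  intros D D' h hle. exact (hle x h).
Defined.

Definition eta (X : Poset) : Mono X (UpDn X).
Proof.
  exists (eta_obj X).
  intros x y hxy D hD. exact (proj2_sig D x y hD hxy).
Defined.

Definition mu_obj (X : Poset) (t : UpDn (UpDn X)) : UpDn X.
Proof.
  exists (fun D : Dn X => exists DD : Dn (UpDn X), proj1_sig t DD /\
            forall U : UpDn X, proj1_sig DD U -> proj1_sig U D).
  intros D D' [DD [h1 h2]] hle. exists DD; split; auto.
  intros U hU. exact (proj2_sig U D D' (h2 U hU) hle).
Defined.

Definition mu (X : Poset) : Mono (UpDn (UpDn X)) (UpDn X).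
Proof.
  exists (mu_obj X).
  intros t s hts D [DD [h1 h2]]. exists DD; split; auto.
Defined.

Definition down (X : Poset) (x : X) : Dn X.
Proof.
  exists (fun y => le y x).
  intros a b hb hab. eapply le_trans; eauto.
Defined.

Definition preim {X Y : Poset} (f : Mono X Y) (D : Dn Y) : Dn X.
Proof.
  exists (fun x => proj1_sig D (f x)).
  intros a b hb hab. exact (proj2_sig D (f a) (f b) hb (mfun_mono f _ _ hab)).
Defined.

Definition sat (X : Poset) (D : Dn X) : Dn (UpDn X).
Proof.
  exists (fun U : UpDn X => proj1_sig U D).
  intros U V hV hle. exact (hle D hV).
Defined.

Lemma mu_map_char (X Y : Poset) (g : Mono Y (UpDn X)) (t : Up (Dn Y)) (D : Dn X) :
  proj1_sig (mu X (Up_map (Dn_map g) t)) D <->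
  exists XX : Dn Y, proj1_sig t XX /\ forall a, proj1_sig XX a -> proj1_sig (g a) D.
Proof.
  split.
  - intros [DD [[XX [h1 h2]] h3]]. exists XX; split; auto.
    intros a ha. apply h3. apply h2. simpl. exists a; split; auto.
  - intros [XX [h1 h2]]. exists (Dn_obj g XX); split.
    + simpl. exists XX; split; auto.
    + intros U [a [ha hle]]. apply hle. auto.
Qed.

Theorem mainTheorem4 :
  exists (eta : forall X : Poset, Mono X (UpDn X))
         (mu : forall X : Poset, Mono (UpDn (UpDn X)) (UpDn X)),
    is_UpDn_monad eta mu.
Proof.
  exists eta, mu.
  split; [|split; [|split; [|split]]].
  - intros X Y f x. apply sig_pred_ext. intro D'. simpl. split.
    + intros [D [hD hle]]. apply hle. simpl. exists x; split; auto. apply le_refl.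
    + intros h. exists (down X x). split; [apply le_refl|].
      intros y [x' [hx' hy]]. simpl in hx'.
      apply (proj2_sig D' y (f x)); auto.
      eapply le_trans; [exact hy|]. apply mfun_mono; auto.
  - intros X Y f t. apply sig_pred_ext. intro D'. split.
    + intros [D [[DD [h1 h2]] h3]].
      apply (proj2 (mu_map_char Y (UpDn X) (UpDn_map f) t D')).
      exists DD; split; auto. intros U hU. simpl. exists D; split; auto.
    + intro h. apply (proj1 (mu_map_char Y (UpDn X) (UpDn_map f) t D')) in h.
      destruct h as [DD [h1 h2]].
      simpl. exists (preim f D'). split.
      * exists DD; split; auto. intros U hU.
        destruct (h2 U hU) as [D0 [hD0 hle]].
        apply (proj2_sig U D0 (preim f D') hD0).
        intros x hx. simpl. apply hle. simpl. exists x; split; auto. apply le_refl.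
      * intros y [x [hx hy]]. simpl in hx. exact (proj2_sig D' y (f x) hx hy).
  - intros X t. apply sig_pred_ext. intro D. split.
    + intros [DD [h1 h2]]. apply h2. exact h1.
    + intros h. exists (down (UpDn X) t). split; [simpl; auto|].
      intros U hU. apply hU. exact h.
  - intros X t. apply sig_pred_ext. intro D.
    rewrite (mu_map_char X X (eta X) t D). split.
    + intros [XX [h1 h2]]. apply (proj2_sig t XX D h1). intros x hx. exact (h2 x hx).
    + intros h. exists D. split; auto.
  - intros X t. apply sig_pred_ext. intro D.
    rewrite (mu_map_char X (UpDn (UpDn X)) (mu X) t D). split.
    + intros [XX [h1 h2]]. exists (sat X D). split.
      * exists XX. split; auto. intros A hA.
        destruct (h2 A hA) as [DD [hDD hU]].
        apply (proj2_sig A DD (sat X D) hDD). intros U hUU. exact (hU U hUU).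
      * intros U hU. exact hU.
    + intros [DD [[XX [h1 h2]] h3]]. exists XX. split; auto.
      intros A hA. exists DD. split; auto.
Qed.
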